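(* Let $1\le d\le r$ and $0\le k\le r-1$ be integers. Then: (i) All entries of $g^{r,d}_k$ are non-negative, and $\mathrm{last}(g^{r,d}_k)=0$ if and only if either ($d$ is even, $d=r$ and $k=0$) or ($d=1$ and $k>0$). (ii) If $d$ is odd, then $\mathrm{last}(\hat g^{r,d}_k)>0$ for $k\ge d/2$ and $\mathrm{last}(\hat g^{r,d}_k)<0$ for $k<d/2$. (iii) If $d$ is even, then $\mathrm{last}(\hat g^{r,d}_k)>0$ for $k>\frac{d+r}{2}$ and $\mathrm{last}(\hat g^{r,d}_k)<0$ for $k<\frac{d+r}{2}$; moreover, if $r$ is even, then $\mathrm{last}(\hat g^{r,d}_{(d+r)/2})=0$.
   Context: For integers $r\ge0$, $d\ge1$ and $i\in\mathbb Z$, $C(r,d,i)$ denotes the number of integer vectors $(u_1,\dots,u_d)$ with $u_1+\cdots+u_d=i$ and $0\le u_l\le r$ for all $l$. For integers $d\ge1$, $r\ge1$, $k\ge0$: if $0\le k\le r-1$, let $\hat g^{r,d}_k=(g_0,g_1,\dots,g_{\lfloor d/2\rfloor+1})\in\mathbb Z^{\lfloor d/2\rfloor+2}$ with $g_0=C(r-1,d,-k)=\delta_{0,k}$ and $g_i=C(r-1,d,ir-k)-C(r-1,d,(i-1)r-k)$ for $1\le i\le\lfloor d/2\rfloor+1$; if $k\ge r$, $\hat g^{r,d}_k$ is the zero vector. The vector $g^{r,d}_k\in\mathbb Z^{\lfloor d/2\rfloor+1}$ is obtained from $\hat g^{r,d}_k$ by deleting its last entry. For a vector $v$, $\mathrm{last}(v)$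 denotes its rightmost entry. *)

(* Defs.v *)
From HB Require Import structures.
From mathcomp Require Import all_boot all_order all_algebra.
Set Implicit Arguments. Unset Strict Implicit. Unset Printing Implicit Defensive.
Import Order.TTheory GRing.Theory Num.Theory.
Local Open Scope ring_scope.

Definition Ccount (r d : nat) (i : int) : nat :=
  #|[set u : {ffun 'I_d -> 'I_r.+1} | ((\sum_(l < d) (u l : nat))%N)%:Z == i]|.

Definition ghat_entry (r d k i : nat) : int :=
  if i is i'.+1 then
    (Ccount r.-1 d ((i * r)%N%:Z - k%:Z))%:Z
    - (Ccount r.-1 d ((i' * r)%N%:Z - k%:Z))%:Z
  else (Ccount r.-1 d (- k%:Z))%:Z.

Definition ghat (r d k : nat) : seq int :=
  if (k < r)%N then [seq ghat_entry r d k i | i <- iota 0 (d./2 + 2)]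
  else nseq (d./2 + 2) 0.

Definition gvec (r d k : nat) : seq int := take (d./2 + 1) (ghat r d k).

Definition lastv (v : seq int) : int := last 0 v.

(* Main.v *)
Require Import Defs.
From HB Require Import structures.
From mathcomp Require Import all_boot all_order all_algebra.
From mathcomp Require Import zify.
Import Order.TTheory GRing.Theory Num.Theory.
Local Open Scope ring_scope.

Definition Bp (s : nat) : {poly int} := \sum_(j < s.+1) 'X^j.
Definition c s n (x : int) : int := (Ccount s n x)%:Z.

Lemma Ccount_sum s n (x : int) :
  (Ccount s n x)%:Z = \sum_(f : {ffun 'I_n -> 'I_s.+1}) ((\sum_(l < n) (f l : nat))%N%:Z == x)%:R.
Proof.
rewrite /Ccount -sum1_card big_mkcond /= -natz natr_sum.
by apply: eq_bigr => f _; rewrite inE; case: ifP.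
Qed.

Lemma CcountE s n m : (Ccount s n m%:Z)%:Z = ((Bp s)^+n)`_m.
Proof.
rewrite Ccount_sum /Bp.
have -> : (\sum_(j < s.+1) 'X^j)^+n = \prod_(i < n) \sum_(j < s.+1) ('X^j : {poly int})
  by rewrite prodr_const card_ord.
rewrite bigA_distr_bigA /= coef_sum; apply: eq_bigr => f _.
by rewrite prodrXr coefXn eqz_nat eq_sym.
Qed.

Lemma Ccount_neg s n (x : int) : x < 0 -> Ccount s n x = 0%N.
Proof.
move=> hx; apply/eqP; rewrite -(eqz_nat _ 0) Ccount_sum big1 // => f _.
by case: eqP => // e; move: hx; rewrite -e.
Qed.

Lemma cE s n m j : c s n (m%:Z - j%:Z) = if (j <= m)%N then ((Bp s)^+n)`_(m - j) else 0.
Proof.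
rewrite /c; case: leqP => h.
  have -> : m%:Z - j%:Z = (m - j)%N%:Z by lia.
  by rewrite CcountE.
by rewrite Ccount_neg //; lia.
Qed.

Lemma Bp_mul s : (1 - 'X) * Bp s = 1 - 'X^(s.+1).
Proof.
have := subrXX (1 : {poly int}) 'X s.+1; rewrite expr1n => ->; congr (_ * _).
by apply: eq_bigr => i _; rewrite expr1n mul1r.
Qed.

Lemma c_diff s n x : c s n.+1 x - c s n.+1 (x - 1) = c s n x - c s n (x - s.+1%:Z).
Proof.
case: (ltP x 0) => hx.
  by rewrite /c !Ccount_neg //; lia.
have [m ->] : exists m : nat, x = m%:Z by exists `|x|%N; lia.
rewrite -(subr0 (m%:Z)) !cE !leq0n !subn0.
have e : (1 - 'X) * (Bp s)^+n.+1 = (1 - 'X^(s.+1)) * (Bp s)^+n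
  by rewrite exprS mulrA Bp_mul.
have := congr1 (fun p : {poly int} => p`_m) e.
rewrite !mulrBl !mul1r !coefB coefXM coefXnM.
rewrite !addn0; case: m {hx e} => [|m] /=.
  by rewrite subr0 => ->.
rewrite subn1 /= => ->.
by rewrite ltnNge; case: leqP.

Qed.

Definition revf s n (f : {ffun 'I_n -> 'I_s.+1}) : {ffun 'I_n -> 'I_s.+1} :=
  [ffun l => rev_ord (f l)].

Lemma revfK s n : involutive (@revf s n).
Proof. by move=> f; apply/ffunP => l; rewrite !ffunE rev_ordK. Qed.

Lemma revf_sum s n f :
  ((\sum_(l < n) (@revf s n f l : nat))%N%:Z = (n * s)%N%:Z - (\sum_(l < n) (f l : nat))%N%:Z)%R.
Proof.
have h : (\sum_(l < n) (@revf s n f l : nat) + \sum_(l < n) (f l : nat) = n * s)%N.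
  rewrite -big_split /= (eq_bigr (fun _ => s)) ?sum_nat_const ?card_ord //.
  move=> l _; rewrite ffunE /=; have := ltn_ord (f l); lia.
apply/eqP; rewrite -h; rewrite PoszD; apply/eqP; lia.
Qed.

Lemma Ccount_sym s n (x : int) : Ccount s n x = Ccount s n ((n * s)%N%:Z - x).
Proof.
apply/eqP; rewrite -eqz_nat !Ccount_sum; apply/eqP.
rewrite [RHS](reindex_inj (can_inj (@revfK s n))); apply: eq_bigr => f _.
rewrite revf_sum; congr (_%:R); apply/eqP/eqP; lia.
Qed.

Lemma c0 s n : c s n 0 = 1.
Proof.
rewrite /c (CcountE s n 0) -horner_coef0 horner_exp /Bp horner_sum.
rewrite big_ord_recl /= hornerXn expr0n /= big1 ?addr0 ?expr1n // => i _.
by rewrite hornerXn expr0n.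
Qed.

Lemma c_neg s n x : x < 0 -> c s n x = 0.
Proof. by move=> h; rewrite /c Ccount_neg. Qed.
Lemma c_sym s n x : c s n x = c s n ((n * s)%N%:Z - x).
Proof. by rewrite /c -Ccount_sym. Qed.
Lemma c_ge0 s n x : 0 <= c s n x.
Proof. by []. Qed.

Arguments c_neg {s n x}.
Definition W s n := forall y : int, 2 * y <= (n * s)%N%:Z + 1 -> c s n (y - 1) <= c s n y.
Definition S s n := (2 <= n)%N -> forall y : int, 0 <= y -> 2 * y <= (n * s)%N%:Z ->
  c s n (y - 1) < c s n y.

Lemma mono s n : W s n -> forall a b, a <= b -> 2 * b <= (n * s)%N%:Z + 1 -> c s n a <= c s n b.
Proof.
move=> hW a b hab hb.
have [t ht] : exists t : nat, a = b - t%:Z by exists `|b - a|%N; lia.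
rewrite {}ht {hab}; elim: t b hb => [|t IH] b hb; first by rewrite subr0.
apply: le_trans (hW _ hb); have -> : b - t.+1%:Z = (b - 1) - t%:Z by lia.
apply: IH; lia.
Qed.

Arguments mono {s n}.
Lemma smono s n : W s n -> S s n -> (2 <= n)%N -> forall a b, a < b -> 0 <= b ->
  2 * b <= (n * s)%N%:Z -> c s n a < c s n b.
Proof.
move=> hW hS hn a b hab h0 hb.
apply: (le_lt_trans _ (hS hn b h0 hb)); apply: (mono hW); lia.
Qed.

Lemma pos s n y : W s n -> 0 <= y -> y <= (n * s)%N%:Z -> 1 <= c s n y.
Proof.
move=> hW h0 h1; rewrite -(c0 s n).
case: (leP (2 * y) ((n * s)%N%:Z + 1)) => h.
  by apply: (mono hW) => //; lia.
rewrite [c s n y]c_sym; apply: (mono hW); lia.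
Qed.

Arguments smono {s n}.
Arguments pos {s n y}.
Lemma step s n : W s n -> S s n -> W s n.+1 /\ S s n.+1.
Proof.
move=> hW hS.
have key : forall y : int, 2 * y <= (n * s)%N%:Z + s%:Z + 1 -> c s n (y - s.+1%:Z) <= c s n y.
  move=> y hy; case: (leP (2 * y) ((n * s)%N%:Z + 1)) => h.
    by apply: (mono hW) => //; lia.
  rewrite [c s n y]c_sym; apply: (mono hW); lia.
split.
  move=> y hy; rewrite -subr_ge0 c_diff subr_ge0; apply: key; lia.
move=> hn y h0 hy; rewrite -subr_gt0 c_diff subr_gt0.
have hn1 : (1 <= n)%N by lia.
have hsN : (s <= n * s)%N by rewrite leq_pmull.
have e : (n.+1 * s = n * s + s)%N by rewrite mulSn addnC.
rewrite e in hy.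
case: (ltP (y - s.+1%:Z) 0) => hneg.
  rewrite (c_neg hneg); apply: (lt_le_trans _ (pos hW h0 _)) => //; lia.
have hn2 : (2 <= n)%N.
  case: n hn hn1 hW hS hsN e hy {key} => [|[|n]] //= _ _ _ _ _ _; rewrite mul1n; lia.
case: (leP (2 * y) ((n * s)%N%:Z)) => h.
  by apply: (smono hW hS) => //; lia.
rewrite [c s n y]c_sym; apply: (smono hW hS) => //; lia.
Qed.

Lemma WS s n : W s n /\ S s n.
Proof.
elim: n => [|n [hW hS]]; last exact: step.
split => // y hy.
case: (ltP y 0) => h; first by rewrite !c_neg //; lia.
have -> : y = 0 by lia.
by rewrite c_neg.
Qed.

Definition D s n x := c s n x - c s n (x - 1).

Lemma D_ge0 s n x : 2 * x <= (n * s)%N%:Z + 1 -> 0 <= D s n x.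
Proof. by move=> h; rewrite /D subr_ge0; case: (WS s n) => hW _; apply: hW. Qed.

Lemma D_gt0 s n x : (2 <= n)%N -> 0 <= x -> 2 * x <= (n * s)%N%:Z -> 0 < D s n x.
Proof. by move=> hn h0 h; rewrite /D subr_gt0; case: (WS s n) => _ hS; apply: hS. Qed.

Lemma D_eq0 s n x : 2 * x = (n * s)%N%:Z + 1 -> D s n x = 0.
Proof.
move=> h; rewrite /D [c s n (x - 1)]c_sym.
have -> : (n * s)%N%:Z - (x - 1) = x by lia.
by rewrite subrr.
Qed.

Lemma D_lt0 s n x : (2 <= n)%N -> (n * s)%N%:Z + 2 <= 2 * x -> x <= (n * s)%N%:Z + 1 ->
  D s n x < 0.
Proof.
move=> hn h1 h2.
have := D_gt0 s n ((n * s)%N%:Z - x + 1) hn.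
rewrite /D [c s n (_ - x + 1)]c_sym [c s n (_ - x + 1 - 1)]c_sym.
have -> : (n * s)%N%:Z - ((n * s)%N%:Z - x + 1) = x - 1 by lia.
have -> : (n * s)%N%:Z - ((n * s)%N%:Z - x + 1 - 1) = x by lia.
move=> H; rewrite -oppr_gt0 opprB; apply: H; lia.
Qed.

Lemma entryE s d k i :
  ghat_entry s.+1 d k i.+1 = D s d.+1 ((i.+1 * s.+1)%N%:Z - k%:Z).
Proof.
rewrite /D c_diff /ghat_entry /c /=; congr (_ - (Ccount _ _ _)%:Z); lia.
Qed.

Lemma last_map_iota (f : nat -> int) m :
  last 0 [seq f i | i <- iota 0 m.+1] = f m.
Proof.
rewrite -nth_last size_map size_iota (nth_map 0%N) ?size_iota //.
by rewrite nth_iota.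
Qed.

Lemma last_nseq0 m : last (0 : int) (nseq m 0) = 0.
Proof. by elim: m. Qed.

Lemma lastv_ghat s d k : (k < s.+1)%N ->
  lastv (ghat s.+1 d k) = D s d.+1 ((d./2.+1 * s.+1)%N%:Z - k%:Z).
Proof.
move=> hk; rewrite /lastv /ghat hk addn2 last_map_iota.
exact: entryE.
Qed.

Lemma lastv_gvec s d k : (k < s.+1)%N ->
  lastv (gvec s.+1 d k) = ghat_entry s.+1 d k d./2.
Proof.
move=> hk; rewrite /lastv /gvec /ghat hk -map_take take_iota.
by rewrite (_ : minn _ _ = (d./2).+1) ?last_map_iota //; rewrite addn1 addn2; lia.
Qed.

Theorem mainTheorem7 (r d k : nat) (hd1 : (1 <= d)%N) (hdr : (d <= r)%N) (hk : (k < r)%N) :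
  (* (i) *)
  ((all (fun x : int => 0 <= x) (gvec r d k)) /\
   (lastv (gvec r d k) = 0 <->
      ((~~ odd d) && (d == r) && (k == 0%N)) || ((d == 1%N) && (0 < k)%N)))
  /\
  (* (ii) *)
  (odd d ->
     ((d <= 2 * k)%N -> 0 < lastv (ghat r d k)) /\
     ((2 * k < d)%N -> lastv (ghat r d k) < 0))
  /\
  (* (iii) *)
  (~~ odd d ->
     ((d + r < 2 * k)%N -> 0 < lastv (ghat r d k)) /\
     ((2 * k < d + r)%N -> lastv (ghat r d k) < 0) /\
     (~~ odd r -> lastv (ghat r d ((d + r)./2)) = 0)).
Proof.
case: r hdr hk => [|s] hdr hk; first by lia.
split; [split|split].
- rewrite /gvec /ghat hk -map_take take_iota; apply/allP => x /mapP [i hi ->].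
  case: i hi => [|i] hi; first by rewrite /ghat_entry.
  change (0 <= ghat_entry s.+1 d k i.+1); rewrite (entryE s d k i); apply: D_ge0.
  move: hi; rewrite mem_iota => /andP [_ hi].
  have hi2 : (i.+1 * 2 * s <= d * s)%N.
    by rewrite leq_mul2r; apply/orP; right; move: hi (odd_double_half d); case: (odd d); lia.
  lia.
- rewrite lastv_gvec //.
  have ed := odd_double_half d; move: ed; rewrite -/(half d).
  case: (d./2) => [|m] ed.
    rewrite /ghat_entry; move: ed; case hod: (odd d) => ed; last by subst d.
    have hd : d = 1%N by lia.
    subst d => /=; rewrite (_ : (1 + 0.*2)%N = 1%N) //.
    case: k hk => [|k] hk.
      have h1 : c s 1 (- 0%:Z) = 1 by rewrite oppr0 c0.
      by rewrite /c in h1; rewrite h1.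
    by rewrite Ccount_neg.
  rewrite (entryE s d k m).
  have hi2 : (m.+1 * 2 * s <= d * s)%N.
    by rewrite leq_mul2r; apply/orP; right; move: ed; case: (odd d); lia.
  have hms : (0 <= m * s)%N by [].
  move: ed hi2 hdr; case hod: (odd d) => /= ed hi2 hdr.
  + have hd : d = (2 * m + 3)%N by lia.
    have -> : (d == 1%N) = false by apply/eqP; lia.
    rewrite /=.
    split => [H|]; last by [].
    have : 0 < D s d.+1 ((m.+1 * s.+1)%N%:Z - k%:Z).
      by apply: D_gt0; [lia|lia|rewrite hd; lia].
    by rewrite H.
  + have hd : d = (2 * m + 2)%N by lia.
    have -> : (d == 1%N) = false by apply/eqP; lia.
    rewrite /= orbF.
    split => [H|/andP [/eqP e1 /eqP e2]].
      case: (eqVneq (2 * ((m.+1 * s.+1)%N%:Z - k%:Z)) ((d.+1 * s)%N%:Z + 1)) => e.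
        by apply/andP; split; apply/eqP; move: e; rewrite hd; lia.
      have : 0 < D s d.+1 ((m.+1 * s.+1)%N%:Z - k%:Z).
        apply: D_gt0; [lia|lia|].
        have : 2 * ((m.+1 * s.+1)%N%:Z - k%:Z) <= (d.+1 * s)%N%:Z + 1 by rewrite hd; lia.
        by rewrite le_eqVlt (negbTE e) /= => h; lia.
      by rewrite H.
    by apply: D_eq0; rewrite hd; lia.
- move=> hod; rewrite lastv_ghat //.
  have ed := odd_double_half d; rewrite hod in ed; move: (d./2) ed => m ed.
  have hms : (0 <= m * s)%N by [].
  split => h.
    apply: D_gt0; lia.
  apply: D_lt0; lia.
- move=> hod; split; [|split].
  + move=> h; rewrite lastv_ghat; last by lia.
    have ed := odd_double_half d; rewrite (negbTE hod) in ed; move: (d./2) ed => m ed.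
    have hms : (0 <= m * s)%N by [].
    apply: D_gt0; lia.
  + move=> h; rewrite lastv_ghat //.
    have ed := odd_double_half d; rewrite (negbTE hod) in ed; move: (d./2) ed => m ed.
    have hmsf : (m <= m * s)%N by rewrite leq_pmulr //; lia.
    apply: D_lt0; lia.
  + move=> hr.
    have eK : ((d + s.+1)./2).*2 = (d + s.+1)%N by rewrite even_halfK // oddD (negbTE hod) (negbTE hr).
    move: ((d + s.+1)./2) eK => K eK.
    case: (ltnP K s.+1) => hK.
      rewrite lastv_ghat //.
      have ed := odd_double_half d; rewrite (negbTE hod) in ed; move: (d./2) ed => m ed.
      apply: D_eq0; lia.
    by rewrite /lastv /ghat ltnNge hK /= last_nseq0.
Qed.
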